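(* Let $H$ be a finite-dimensional real Hilbert space, $f:H\to\mathbb{R}\cup\{+\infty\}$ a proper lower semicontinuous function and $\bar x\in\operatorname{dom}f$. The following are equivalent: (i) $\bar x$ is a strict local minimizer of order two for $f$; (ii) $0\in\partial_pf(\bar x)$ and there exists $\beta>0$ such that $f''_-(\bar x,0,h)\ge\beta$ holds uniformly with respect to $h\in S_H$; (iii) $0\in\partial_pf(\bar x)$ and there exists $\beta>0$ such that $f''_-(\bar x,0,h)\ge\beta$ for all $h\in S_H$; (iv) $0\in\partial_pf(\bar x)$ and $f''_-(\bar x,0,h)>0$ for all $h\in S_H$.
   Context: $S_H$ and $B_H$ are the unit sphere and closed unit ball of $H$; $B(x,\delta)$ is the open ball. $\bar x$ is a strict local minimizer of order two for $f$ if there exist $\beta,\delta>0$ with $f(x)\ge f(\bar x)+\frac{\beta}{2}\|x-\bar x\|^2$ for all $x\in B(\bar x,\delta)$. Proximal subdifferential: $\zeta\in\partial_p f(x)$ iff there exist $\sigma,\delta>0$ with $f(y)\ge f(x)+\langle\zeta,y-x\rangle-\frac{\sigma}{2}\|y-x\|^2$ whenever $\|y-x\|<\delta$. $\Delta_2 f(\bar x,p,t,u):=\frac{f(\bar x+tu)-f(\bar x)-t\langle p,u\rangle}{\frac12t^2}$, $f''_-(\bar x,p,h):=\liminf_{h'\to h,\,t\downarrow0}\Delta_2f(\bar x,p,t,h')$. ''$f''_-(\bar x,p,h)\ge\beta$ holds uniformly with respect to $h\in A$'' means: for every $\varepsilon>0$ there exists $\delta>0$ such that $\Delta_2f(\bar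 x,p,t,h)\ge\beta-\varepsilon$ for all $t\in(0,\delta)$ and all $h\in A+\delta B_H$. *)

(* Defs.v *)
From Stdlib Require Import Reals Lra Classical ClassicalEpsilon.
From Stdlib Require Vectors.Fin.
Open Scope R_scope.

(* Every finite-dimensional real Hilbert space is isometrically isomorphic to
   R^n with the standard inner product; we take H := Fin.t n -> R. *)
Definition vec (n : nat) : Type := Fin.t n -> R.

Fixpoint fsum (n : nat) : (Fin.t n -> R) -> R :=
  match n return (Fin.t n -> R) -> R with
  | O => fun _ => 0
  | S m => fun g => g Fin.F1 + fsum m (fun i => g (Fin.FS i))
  end.

Definition vadd {n} (u v : vec n) : vec n := fun i => u i + v i.
Definition vsub {n} (u v : vec n) : vec n := fun i => u i - v i.
Definition vscal {n} (a : R) (u : vec n) : vec n := fun i => a * u i.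
Definition vzero {n} : vec n := fun _ => 0.
Definition inner {n} (u v : vec n) : R := fsum n (fun i => u i * v i).
Definition norm {n} (u : vec n) : R := sqrt (inner u u).

Definition unit_sphere {n} (h : vec n) : Prop := norm h = 1.

Inductive Rbar : Type := Fin (r : R) | PInfty | MInfty.

Definition Rbar_le (a b : Rbar) : Prop :=
  match a, b with
  | MInfty, _ => True
  | _, PInfty => True
  | Fin x, Fin y => x <= y
  | _, _ => False
  end.
Definition Rbar_lt (a b : Rbar) : Prop := Rbar_le a b /\ a <> b.

(* real part (used only at points where the value is finite) *)
Definition real (a : Rbar) : R := match a with Fin x => x | _ => 0 end.

Definition Rbar_addR (a : Rbar) (r : R) : Rbar :=
  match a with Fin x => Fin (x + r) | PInfty => PInfty | MInfty => MInfty end.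
(* multiplication by a (positive) real scalar *)
Definition Rbar_mulR (c : R) (a : Rbar) : Rbar :=
  match a with Fin x => Fin (c * x) | PInfty => PInfty | MInfty => MInfty end.

Definition is_lub_Rbar (E : Rbar -> Prop) (l : Rbar) : Prop :=
  (forall x, E x -> Rbar_le x l) /\
  (forall b, (forall x, E x -> Rbar_le x b) -> Rbar_le l b).
Definition is_glb_Rbar (E : Rbar -> Prop) (l : Rbar) : Prop :=
  (forall x, E x -> Rbar_le l x) /\
  (forall b, (forall x, E x -> Rbar_le b x) -> Rbar_le b l).
Definition Rbar_sup (E : Rbar -> Prop) : Rbar :=
  epsilon (inhabits PInfty) (is_lub_Rbar E).
Definition Rbar_inf (E : Rbar -> Prop) : Rbar :=
  epsilon (inhabits PInfty) (is_glb_Rbar E).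

Definition in_dom {n} (f : vec n -> Rbar) (x : vec n) : Prop :=
  exists r, f x = Fin r.

Definition proper {n} (f : vec n -> Rbar) : Prop :=
  (forall x, f x <> MInfty) /\ (exists x, in_dom f x).

Definition lsc {n} (f : vec n -> Rbar) : Prop :=
  forall x (r : R), Rbar_lt (Fin r) (f x) ->
    exists delta, delta > 0 /\
      forall y, norm (vsub y x) < delta -> Rbar_lt (Fin r) (f y).

Definition strict_local_min_order2 {n} (f : vec n -> Rbar) (xb : vec n) : Prop :=
  exists beta delta, beta > 0 /\ delta > 0 /\
    forall x, norm (vsub x xb) < delta ->
      Rbar_le (Fin (real (f xb) + beta / 2 * (norm (vsub x xb))^2)) (f x).

Definition prox_subdiff {n} (f : vec n -> Rbar) (x zeta : vec n) : Prop :=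
  in_dom f x /\
  exists sigma delta, sigma > 0 /\ delta > 0 /\
    forall y, norm (vsub y x) < delta ->
      Rbar_le (Fin (real (f x) + inner zeta (vsub y x)
                    - sigma / 2 * (norm (vsub y x))^2)) (f y).

Definition Delta2 {n} (f : vec n -> Rbar) (xb p : vec n) (t : R) (u : vec n) : Rbar :=
  Rbar_mulR (/ (t^2 / 2))
    (Rbar_addR (f (vadd xb (vscal t u))) (- real (f xb) - t * inner p u)).

(* lower second order directional derivative
   f''_-(xb,p,h) = liminf_{h'->h, t downarrow 0} Delta2 f(xb,p,t,h')
                 = sup_{delta>0} inf { Delta2 f(xb,p,t,h') : 0<t<delta, |h'-h|<delta } *)
Definition lower_sod {n} (f : vec n -> Rbar) (xb p h : vec n) : Rbar :=
  Rbar_sup (fun v => exists delta, delta > 0 /\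
    v = Rbar_inf (fun w => exists t h', 0 < t < delta /\
                             norm (vsub h' h) < delta /\ w = Delta2 f xb p t h')).

(* "f''_-(xb,p,h) >= beta holds uniformly with respect to h in A":
   forall eps>0 exists delta>0, Delta2 f(xb,p,t,h) >= beta - eps
   for all t in (0,delta) and all h in A + delta B_H *)
Definition uniform_sod_ge {n} (f : vec n -> Rbar) (xb p : vec n)
    (beta : R) (A : vec n -> Prop) : Prop :=
  forall eps, eps > 0 -> exists delta, delta > 0 /\
    forall t h, 0 < t < delta ->
      (exists a b, A a /\ norm b <= 1 /\ h = vadd a (vscal delta b)) ->
      Rbar_le (Fin (beta - eps)) (Delta2 f xb p t h).

(* Main.v *)
Require Import Defs.
From Stdlib Require Import Reals Lra Lia Classical ClassicalEpsilon FunctionalExtensionality.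
Open Scope R_scope.

Lemma fsum_ext n (g h : Fin.t n -> R) : (forall i, g i = h i) -> fsum n g = fsum n h.
Proof. intros H. f_equal. apply functional_extensionality; auto. Qed.

Lemma fsum_add n (g h : Fin.t n -> R) : fsum n (fun i => g i + h i) = fsum n g + fsum n h.
Proof. revert g h; induction n; intros g h; simpl. lra.
  rewrite (IHn (fun i => g (Fin.FS i)) (fun i => h (Fin.FS i))). lra. Qed.

Lemma fsum_scal n c (g : Fin.t n -> R) : fsum n (fun i => c * g i) = c * fsum n g.
Proof. revert g; induction n; intros g; simpl. lra.
  rewrite (IHn (fun i => g (Fin.FS i))). lra. Qed.

Lemma fsum_zero n : fsum n (fun _ => 0) = 0.
Proof. induction n; simpl. lra. rewrite IHn. lra. Qed.

Lemma fsum_le n (g h : Fin.t n -> R) : (forall i, g i <= h i) -> fsum n g <= fsum n h.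
Proof. revert g h; induction n; intros g h H; simpl. lra.
  pose proof (IHn (fun i => g (Fin.FS i)) (fun i => h (Fin.FS i)) (fun i => H (Fin.FS i))).
  pose proof (H Fin.F1). lra. Qed.

Lemma fsum_nonneg n (g : Fin.t n -> R) : (forall i, 0 <= g i) -> 0 <= fsum n g.
Proof. intros H. rewrite <- (fsum_zero n). apply fsum_le. auto. Qed.

Lemma fsum_term n (g : Fin.t n -> R) : (forall i, 0 <= g i) -> forall i, g i <= fsum n g.
Proof. intros Hg i. revert g Hg. induction i as [m|m i IH]; intros g Hg; simpl.
  - pose proof (fsum_nonneg m (fun i => g (Fin.FS i)) (fun i => Hg (Fin.FS i))). lra.
  - pose proof (IH (fun i => g (Fin.FS i)) (fun i => Hg (Fin.FS i))). pose proof (Hg Fin.F1). simpl in *. lra.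
Qed.

Lemma cv_const (c : R) : Un_cv (fun _ => c) c.
Proof. intros e He. exists 0%nat. intros. unfold R_dist. replace (c - c) with 0 by ring.
  rewrite Rabs_R0. lra. Qed.

Lemma fsum_cv n (g : nat -> Fin.t n -> R) (l : Fin.t n -> R) :
  (forall i, Un_cv (fun k => g k i) (l i)) -> Un_cv (fun k => fsum n (g k)) (fsum n l).
Proof. revert g l; induction n; intros g l H; simpl.
  - apply cv_const.
  - apply CV_plus. apply H. apply (IHn (fun k i => g k (Fin.FS i)) (fun i => l (Fin.FS i))).
    intros i; apply H.
Qed.

Lemma inner_nonneg n (u : vec n) : 0 <= inner u u.
Proof. apply fsum_nonneg. intros i. nra. Qed.

Lemma norm_sq n (u : vec n) : norm u ^ 2 = inner u u.
Proof. unfold norm. replace (sqrt (inner u u) ^ 2) with (sqrt (inner u u) * sqrt (inner u u)) by ring. apply sqrt_sqrt, inner_nonneg. Qed.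

Lemma norm_nonneg n (u : vec n) : 0 <= norm u.
Proof. apply sqrt_pos. Qed.

Lemma norm_lt n (u : vec n) d : 0 < d -> (norm u < d <-> inner u u < d^2).
Proof. intros Hd. rewrite <- norm_sq. pose proof (norm_nonneg n u). split; intros; nra. Qed.

Lemma norm_le n (u : vec n) d : 0 < d -> (norm u <= d <-> inner u u <= d^2).
Proof. intros Hd. rewrite <- norm_sq. pose proof (norm_nonneg n u). split; intros; nra. Qed.

Lemma inner_scal n a (u : vec n) : inner (vscal a u) (vscal a u) = a^2 * inner u u.
Proof. unfold inner, vscal. rewrite <- fsum_scal. apply fsum_ext. intros; ring. Qed.

Lemma inner_zero_l n (u : vec n) : inner vzero u = 0.
Proof. unfold inner, vzero. transitivity (fsum n (fun _ => 0)). apply fsum_ext. intros; ring. apply fsum_zero. Qed.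

Lemma coord_sq_le n (u : vec n) i : u i * u i <= inner u u.
Proof. apply (fsum_term n (fun i => u i * u i)). intros; nra. Qed.

Lemma norm_zero n (u : vec n) : norm u = 0 -> u = vzero.
Proof. intros H. assert (inner u u = 0) by (rewrite <- norm_sq, H; ring).
  apply functional_extensionality. intros i. pose proof (coord_sq_le n u i).
  unfold vzero. nra. Qed.

Lemma Rbar_le_trans a b c : Rbar_le a b -> Rbar_le b c -> Rbar_le a c.
Proof. destruct a, b, c; simpl; intros; auto; try lra; contradiction. Qed.

Lemma Rbar_nlt_le a b : ~ Rbar_lt a b -> Rbar_le b a.
Proof. unfold Rbar_lt. destruct a, b; simpl; intros H; auto;
  try (exfalso; apply H; split; [simpl; auto | discriminate]).
  destruct (Rle_lt_dec r0 r); auto. exfalso; apply H; split. simpl; lra. intro E; inversion E; lra.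
Qed.

Lemma lub_ex (E : Rbar -> Prop) : exists l, is_lub_Rbar E l.
Proof.
  destruct (classic (E PInfty)) as [HP|HP].
  { exists PInfty. split. intros x _; destruct x; simpl; auto.
    intros b Hb. specialize (Hb _ HP). destruct b; simpl in *; auto. }
  destruct (classic (exists r, E (Fin r))) as [[r0 Hr0]|HF].
  - destruct (classic (exists M, forall r, E (Fin r) -> r <= M)) as [[M HM]|HB].
    + destruct (completeness (fun r => E (Fin r))) as [m [Hm1 Hm2]].
      { exists M. intros r Hr; auto. }
      { exists r0; auto. }
      exists (Fin m). split.
      * intros x Hx. destruct x; simpl; auto; try (apply Hm1; auto).
      * intros b Hb. destruct b; simpl; auto.
        -- apply Hm2. intros r1 Hr1. specialize (Hb _ Hr1). simpl in Hb. auto.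
        -- specialize (Hb _ Hr0); simpl in Hb; auto.
    + exists PInfty. split. intros x _; destruct x; simpl; auto.
      intros b Hb. destruct b; simpl; auto.
      * apply HB. exists r. intros r' Hr'. specialize (Hb _ Hr'); simpl in Hb; auto.
      * specialize (Hb _ Hr0); simpl in Hb; auto.
  - exists MInfty. split.
    + intros x Hx. destruct x; simpl; auto; try (exfalso; apply HF; eauto).
    + intros b _. simpl; auto.
Qed.

Lemma glb_ex (E : Rbar -> Prop) : exists l, is_glb_Rbar E l.
Proof.
  destruct (classic (E MInfty)) as [HP|HP].
  { exists MInfty. split. intros x _; destruct x; simpl; auto.
    intros b Hb. specialize (Hb _ HP). destruct b; simpl in *; auto. }
  destruct (classic (exists r, E (Fin r))) as [[r0 Hr0]|HF].
  - destruct (classic (exists M, forall r, E (Fin r) -> M <= r)) as [[M HM]|HB].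
    + destruct (completeness (fun r => E (Fin (- r)))) as [m [Hm1 Hm2]].
      { exists (- M). intros r Hr. specialize (HM _ Hr). lra. }
      { exists (- r0). rewrite Ropp_involutive; auto. }
      exists (Fin (- m)). split.
      * intros x Hx. destruct x; simpl; auto. assert (- r <= m). apply Hm1.
        rewrite Ropp_involutive; auto. lra.
      * intros b Hb. destruct b; simpl; auto.
        -- assert (m <= - r). apply Hm2. intros r' Hr'. specialize (Hb _ Hr'). simpl in Hb. lra. lra.
        -- specialize (Hb _ Hr0); simpl in Hb; auto.
    + exists MInfty. split. intros x _; destruct x; simpl; auto.
      intros b Hb. destruct b; simpl; auto.
      * apply HB. exists r. intros r' Hr'. specialize (Hb _ Hr'); simpl in Hb; auto.
      * specialize (Hb _ Hr0); simpl in Hb; auto.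
  - exists PInfty. split.
    + intros x Hx. destruct x; simpl; auto; try (exfalso; apply HF; eauto).
    + intros b _. destruct b; simpl; auto.
Qed.

Lemma sup_spec E : is_lub_Rbar E (Rbar_sup E).
Proof. unfold Rbar_sup. apply epsilon_spec. apply lub_ex. Qed.
Lemma inf_spec E : is_glb_Rbar E (Rbar_inf E).
Proof. unfold Rbar_inf. apply epsilon_spec. apply glb_ex. Qed.

Lemma sup_pos E : Rbar_lt (Fin 0) (Rbar_sup E) -> exists v, E v /\ Rbar_lt (Fin 0) v.
Proof. intros H. apply NNPP; intro Hn. destruct (sup_spec E) as [_ H2].
  assert (Rbar_le (Rbar_sup E) (Fin 0)).
  { apply H2. intros x Hx. apply Rbar_nlt_le. intro; apply Hn; eauto. }
  destruct H as [H H']. destruct (Rbar_sup E); simpl in *; auto.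
  apply H'; f_equal; lra.
Qed.

Lemma inf_pos E : Rbar_lt (Fin 0) (Rbar_inf E) -> exists c, c > 0 /\ forall w, E w -> Rbar_le (Fin c) w.
Proof. intros [H H']. destruct (inf_spec E) as [H1 _]. destruct (Rbar_inf E) eqn:Ei; simpl in *.
  - exists r. split. destruct H; auto. subst; contradiction. intros w Hw. apply H1; auto.
  - exists 1. split. lra. intros w Hw. specialize (H1 _ Hw). destruct w; simpl in *; auto; contradiction.
  - contradiction.
Qed.

Lemma le_eps beta x : (forall eps, eps > 0 -> Rbar_le (Fin (beta - eps)) x) -> Rbar_le (Fin beta) x.
Proof. intros H. destruct x; simpl; auto.
  - destruct (Rle_lt_dec beta r); auto. specialize (H ((beta - r)/2)). simpl in H. lra.
  - apply (H 1). lra.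
Qed.

Lemma small_inv eps : eps > 0 -> exists N, / INR (S N) < eps.
Proof. intros He. destruct (INR_archimed eps 1 He) as [n Hn]. exists n.
  assert (INR n <= INR (S n)) by (apply le_INR; lia).
  assert (0 < INR (S n)) by (apply lt_0_INR; lia).
  apply (Rmult_lt_reg_l (INR (S n))); auto. rewrite Rinv_r by lra. nra. Qed.

Lemma inv_pos k : 0 < / INR (S k).
Proof. apply Rinv_0_lt_compat, lt_0_INR; lia. Qed.

Lemma inv_mono m k : (m <= k)%nat -> / INR (S k) <= / INR (S m).
Proof. intros H. apply Rinv_le_contravar. apply lt_0_INR; lia. apply le_INR; lia. Qed.

Definition sincr (phi : nat -> nat) := forall k, (phi k < phi (S k))%nat.

Lemma sincr_lt phi : sincr phi -> forall a b, (a < b)%nat -> (phi a < phi b)%nat.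
Proof. intros H a b Hab. induction Hab. apply H. specialize (H m). lia. Qed.

Lemma sincr_ge phi : sincr phi -> forall k, (k <= phi k)%nat.
Proof. intros H k. induction k. lia. specialize (H k). lia. Qed.

Lemma sincr_comp phi psi : sincr phi -> sincr psi -> sincr (fun k => phi (psi k)).
Proof. intros H1 H2 k. apply sincr_lt; auto. Qed.

Lemma cv_sub u l phi : sincr phi -> Un_cv u l -> Un_cv (fun k => u (phi k)) l.
Proof. intros Hp Hu e He. destruct (Hu e He) as [N HN]. exists N. intros k Hk.
  apply HN. pose proof (sincr_ge phi Hp k). lia. Qed.

Lemma bw1 (u : nat -> R) M : (forall k, Rabs (u k) <= M) ->
  exists phi l, sincr phi /\ Un_cv (fun k => u (phi k)) l.
Proof.
  intros HM. destruct (Bolzano_Weierstrass u (fun c => -M <= c <= M) (compact_P3 _ _)) as [l HV].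
  { intros k. specialize (HM k). revert HM. unfold Rabs; destruct Rcase_abs; intros; lra. }
  assert (Hp: forall N j, exists p, (N <= p)%nat /\ Rabs (u p - l) < / INR (S j)).
  { intros N j. destruct (HV (disc l (mkposreal _ (inv_pos j))) N) as [p [Hp1 Hp2]].
    { exists (mkposreal _ (inv_pos j)). intros x Hx; exact Hx. }
    exists p. split; auto. }
  pose (g := fun N j => proj1_sig (constructive_indefinite_description _ (Hp N j))).
  assert (Hg : forall N j, (N <= g N j)%nat /\ Rabs (u (g N j) - l) < / INR (S j)).
  { intros N j. unfold g. apply (proj2_sig (constructive_indefinite_description _ (Hp N j))). }
  pose (phi := nat_rect (fun _ => nat) (g 0%nat 0%nat) (fun j pj => g (S pj) (S j))).
  assert (Hs : forall j, phi (S j) = g (S (phi j)) (S j)) by reflexivity.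
  assert (Hd : forall j, Rabs (u (phi j) - l) < / INR (S j)).
  { intros [|j]. apply (Hg 0%nat 0%nat). rewrite Hs. apply Hg. }
  exists phi, l. split.
  - intros k. rewrite Hs. destruct (Hg (S (phi k)) (S k)). lia.
  - intros e He. destruct (small_inv e He) as [N HN]. exists N. intros k Hk.
    unfold R_dist. pose proof (inv_mono N k Hk). pose proof (Hd k). lra.
Qed.

Lemma bwn n : forall (u : nat -> vec n), (forall k i, Rabs (u k i) <= 1) ->
  exists phi (l : vec n), sincr phi /\ forall i, Un_cv (fun k => u (phi k) i) (l i).
Proof.
  induction n; intros u Hu.
  - exists (fun k => k), vzero. split. intros k; lia. intros i. apply Fin.case0. exact i.
  - destruct (IHn (fun k i => u k (Fin.FS i))) as [phi1 [l1 [Hp1 Hl1]]].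
    { intros; apply Hu. }
    destruct (bw1 (fun k => u (phi1 k) Fin.F1) 1) as [phi2 [l0 [Hp2 Hl0]]].
    { intros; apply Hu. }
    exists (fun k => phi1 (phi2 k)), (fun i => Fin.caseS' i (fun _ => R) l0 l1). split.
    + apply sincr_comp; auto.
    + intros i. apply (Fin.caseS' i).
      * simpl. exact Hl0.
      * intros p. simpl. apply (cv_sub (fun k => u (phi1 k) (Fin.FS p))); auto.
Qed.

Lemma Delta2_eq n (f : vec n -> Rbar) xb r0 t u : f xb = Fin r0 ->
  Delta2 f xb vzero t u = Rbar_mulR (/ (t^2/2)) (Rbar_addR (f (vadd xb (vscal t u))) (- r0)).
Proof. intros H. unfold Delta2. rewrite H, inner_zero_l. simpl real.
  replace (- r0 - t * 0) with (- r0) by ring. reflexivity. Qed.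

Lemma vsub_vadd n (xb h : vec n) t : vsub (vadd xb (vscal t h)) xb = vscal t h.
Proof. apply functional_extensionality; intros i. unfold vsub, vadd, vscal. ring. Qed.

Lemma norm1_inner n (a : vec n) : norm a = 1 -> inner a a = 1.
Proof. intros H. rewrite <- norm_sq, H. ring. Qed.

Lemma dir_i_prox n (f : vec n -> Rbar) xb : in_dom f xb -> strict_local_min_order2 f xb ->
  prox_subdiff f xb vzero.
Proof. intros Hd [b [d [Hb [Hd0 Hi]]]]. split; auto. exists 1, d. split. lra. split; auto.
  intros y Hy. apply Rbar_le_trans with (2 := Hi y Hy). simpl. rewrite inner_zero_l.
  pose proof (norm_nonneg n (vsub y xb)). nra. Qed.

Lemma dir_i_unif n (f : vec n -> Rbar) xb : in_dom f xb -> strict_local_min_order2 f xb ->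
  exists beta, beta > 0 /\ uniform_sod_ge f xb vzero beta unit_sphere.
Proof.
  intros [r0 Hr0] [b0 [d0 [Hb [Hd Hi]]]]. exists b0. split; auto. intros eps He.
  set (dl := Rmin (Rmin (1/2) (eps/(2*b0))) (d0/2)).
  assert (H1 : dl <= 1/2) by (unfold dl; pose proof (Rmin_l (Rmin (1/2) (eps/(2*b0))) (d0/2)); pose proof (Rmin_l (1/2) (eps/(2*b0))); lra).
  assert (H2 : dl <= eps/(2*b0)) by (unfold dl; pose proof (Rmin_l (Rmin (1/2) (eps/(2*b0))) (d0/2)); pose proof (Rmin_r (1/2) (eps/(2*b0))); lra).
  assert (H3 : dl <= d0/2) by (unfold dl; apply Rmin_r).
  assert (H0 : dl > 0).
  { unfold dl. assert (eps/(2*b0) > 0) by (apply Rdiv_lt_0_compat; lra).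
    repeat apply Rmin_glb_lt; lra. }
  assert (H2' : dl * (2*b0) <= eps).
  { assert (dl * (2*b0) <= eps/(2*b0) * (2*b0)) by (apply Rmult_le_compat_r; lra).
    replace (eps/(2*b0)*(2*b0)) with eps in H by (field; lra). lra. }
  exists dl. split; auto. clearbody dl. intros t h Ht [a [b [Ha [Hb1 ->]]]].
  apply norm1_inner in Ha. apply (norm_le n b 1) in Hb1; [|lra].
  set (ih := inner (vadd a (vscal dl b)) (vadd a (vscal dl b))).
  assert (Hlo : fsum n (fun i => (1-dl)*(a i*a i) + (dl^2-dl)*(b i*b i)) <= ih).
  { apply fsum_le. intros i. unfold vadd, vscal.
    assert (0 <= dl * ((a i + b i) * (a i + b i))).
    { apply Rmult_le_pos. lra. pose proof (Rle_0_sqr (a i + b i)). unfold Rsqr in *. lra. }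
    nra. }
  rewrite fsum_add, !fsum_scal in Hlo. fold (inner a a) (inner b b) in Hlo.
  assert (Hup : ih <= fsum n (fun i => 2*(a i*a i) + (2*dl^2)*(b i*b i))).
  { apply fsum_le. intros i. unfold vadd, vscal.
    pose proof (Rle_0_sqr (a i - dl * b i)). unfold Rsqr in *. nra. }
  rewrite fsum_add, !fsum_scal in Hup. fold (inner a a) (inner b b) in Hup.
  rewrite Ha in Hlo, Hup. replace (1^2) with 1 in Hb1 by ring.
  assert (Hlo2 : (1-dl)^2 <= ih).
  { assert (0 <= (dl - dl^2) * (1 - inner b b)) by (apply Rmult_le_pos; nra). nra. }
  assert (Hup2 : ih <= 4).
  { assert (dl^2 * inner b b <= 1/4 * 1). { apply Rmult_le_compat; try nra. apply inner_nonneg. } nra. }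
  specialize (Hi (vadd xb (vscal t (vadd a (vscal dl b))))).
  rewrite vsub_vadd in Hi. rewrite norm_sq, inner_scal in Hi. fold ih in Hi.
  assert (Hn : norm (vscal t (vadd a (vscal dl b))) < d0).
  { apply norm_lt. lra. rewrite inner_scal. fold ih. pose proof (inner_nonneg n (vadd a (vscal dl b))).
    fold ih in H. nra. }
  specialize (Hi Hn). rewrite (Delta2_eq n f xb r0) by auto. rewrite Hr0 in Hi. simpl real in Hi.
  destruct (f (vadd xb (vscal t (vadd a (vscal dl b))))) as [r| |]; simpl in *; auto.
  assert (HK : 0 < / (t^2/2)) by (apply Rinv_0_lt_compat; nra).
  assert (Hm : / (t^2/2) * (r + - r0) >= / (t^2/2) * (b0/2*(t^2*ih))).
  { apply Rmult_ge_compat_l; lra. }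
  replace (/ (t^2/2) * (b0/2*(t^2*ih))) with (b0*ih) in Hm by (field; lra).
  assert (0 <= b0 * (ih - (1-dl)*((1-dl)*1))) by (apply Rmult_le_pos; lra).
  replace (t*(t*1)) with (t^2) by ring. nra.
Qed.

Lemma dir_ii_iii n (f : vec n -> Rbar) xb beta : uniform_sod_ge f xb vzero beta unit_sphere ->
  forall h, unit_sphere h -> Rbar_le (Fin beta) (lower_sod f xb vzero h).
Proof.
  intros Hu h Hh. apply le_eps. intros eps He. destruct (Hu eps He) as [d [Hd Hd2]].
  set (T := fun w => exists t h', 0 < t < d /\ norm (vsub h' h) < d /\ w = Delta2 f xb vzero t h').
  apply Rbar_le_trans with (Rbar_inf T).
  - destruct (inf_spec T) as [_ G]. apply G. intros w [t [h' [Ht [Hh' ->]]]]. apply Hd2; auto.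
    exists h, (vscal (/d) (vsub h' h)). split; auto. split.
    + apply norm_le. lra. rewrite inner_scal. apply norm_lt in Hh'; auto.
      assert ((/d)^2 * d^2 = 1) by (field; lra). assert (0 < (/d)^2) by (apply pow_lt, Rinv_0_lt_compat; lra).
      nra.
    + apply functional_extensionality; intros i. unfold vadd, vscal, vsub. field. lra.
  - destruct (sup_spec (fun v => exists delta, delta > 0 /\
      v = Rbar_inf (fun w => exists t h', 0 < t < delta /\
                             norm (vsub h' h) < delta /\ w = Delta2 f xb vzero t h'))) as [G _].
    apply G. exists d. split; auto.
Qed.

Lemma cv_sqdiff u a : Un_cv u a -> Un_cv (fun k => (u k - a) * (u k - a)) 0.
Proof. intros H. replace 0 with ((a - a) * (a - a)) by ring.
  apply CV_mult; apply CV_minus; auto; apply cv_const. Qed.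

Lemma dir_iv_i n (f : vec n -> Rbar) xb : proper f -> in_dom f xb ->
  (forall h, unit_sphere h -> Rbar_lt (Fin 0) (lower_sod f xb vzero h)) ->
  strict_local_min_order2 f xb.
Proof.
  intros Hprop [r0 Hr0] Hiv. apply NNPP; intro Hn.
  assert (Hk: forall k:nat, exists x, norm (vsub x xb) < / INR (S k) /\
     ~ Rbar_le (Fin (real (f xb) + / INR (S k) / 2 * norm (vsub x xb) ^ 2)) (f x)).
  { intros k. apply NNPP; intro H. apply Hn. exists (/INR (S k)), (/INR (S k)).
    split. apply inv_pos. split. apply inv_pos. intros x Hx. apply NNPP; intro H2.
    apply H. exists x; auto. }
  rewrite Hr0 in Hk. cbn [real] in Hk.
  pose (xs := fun k => proj1_sig (constructive_indefinite_description _ (Hk k))).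
  assert (Hxs : forall k, norm (vsub (xs k) xb) < / INR (S k) /\
     ~ Rbar_le (Fin (r0 + / INR (S k) / 2 * norm (vsub (xs k) xb) ^ 2)) (f (xs k))).
  { intros k. apply (proj2_sig (constructive_indefinite_description _ (Hk k))). }
  clearbody xs. clear Hk.
  pose (tt := fun k => norm (vsub (xs k) xb)).
  assert (Hval : forall k, exists r, f (xs k) = Fin r /\ r < r0 + / INR (S k) / 2 * tt k ^ 2).
  { intros k. destruct (Hxs k) as [_ H]. unfold tt. destruct (f (xs k)) as [r| |] eqn:E.
    - exists r. split; auto. cbn [Rbar_le] in H. apply Rnot_le_lt in H. exact H.
    - exfalso; apply H; exact I.
    - exfalso; apply (proj1 Hprop (xs k)); auto. }
  assert (Hpos : forall k, 0 < tt k).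
  { intros k. destruct (Rle_lt_dec (tt k) 0) as [Hle|]; auto. exfalso.
    assert (E : tt k = 0) by (pose proof (norm_nonneg n (vsub (xs k) xb)); unfold tt in *; lra).
    apply norm_zero in E. assert (xs k = xb).
    { apply functional_extensionality; intros i. assert (vsub (xs k) xb i = vzero i) by (rewrite E; auto).
      unfold vsub, vzero in H. lra. }
    destruct (Hval k) as [r [Hr Hlt]]. rewrite H, Hr0 in Hr. inversion Hr. subst r.
    unfold tt in Hlt. rewrite E in Hlt. unfold norm, inner, vzero in Hlt.
    rewrite (fsum_ext n _ (fun _ => 0)) in Hlt by (intros; ring). rewrite fsum_zero, sqrt_0 in Hlt. lra. }
  pose (hs := fun k => vscal (/ tt k) (vsub (xs k) xb)).
  assert (Hunit : forall k, inner (hs k) (hs k) = 1).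
  { intros k. unfold hs. rewrite inner_scal, <- norm_sq. fold (tt k). pose proof (Hpos k). field. lra. }
  assert (Hbd : forall k i, Rabs (hs k i) <= 1).
  { intros k i. pose proof (coord_sq_le n (hs k) i). rewrite Hunit in H.
    unfold Rabs. destruct Rcase_abs; nra. }
  destruct (bwn n hs Hbd) as [phi [h [Hphi Hcv]]].
  assert (Hih : inner h h = 1).
  { apply (UL_sequence (fun k => inner (hs (phi k)) (hs (phi k)))).
    - apply (fsum_cv n (fun k i => hs (phi k) i * hs (phi k) i) (fun i => h i * h i)).
      intros i. apply CV_mult; apply Hcv.
    - intros e He. exists 0%nat. intros. unfold R_dist. rewrite Hunit.
      replace (1 - 1) with 0 by ring. rewrite Rabs_R0. lra. }
  assert (Hh : unit_sphere h) by (unfold unit_sphere, norm; rewrite Hih; apply sqrt_1).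
  assert (Hd : Un_cv (fun k => inner (vsub (hs (phi k)) h) (vsub (hs (phi k)) h)) 0).
  { rewrite <- (fsum_zero n).
    apply (fsum_cv n (fun k i => (hs (phi k) i - h i) * (hs (phi k) i - h i)) (fun _ => 0)).
    intros i. apply cv_sqdiff. apply Hcv. }
  destruct (sup_pos _ (Hiv h Hh)) as [v [[dl [Hdl ->]] Hv]].
  destruct (inf_pos _ Hv) as [c [Hc Hcw]].
  destruct (Hd (dl^2) ltac:(apply pow_lt; lra)) as [N1 HN1].
  destruct (small_inv (Rmin dl c) ltac:(apply Rmin_glb_lt; lra)) as [N2 HN2].
  set (k := max N1 N2). set (m := phi k).
  assert (Hkm : (k <= m)%nat) by (apply sincr_ge; auto).
  assert (Hb : / INR (S m) < Rmin dl c).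
  { pose proof (inv_mono k m Hkm). pose proof (inv_mono N2 k ltac:(lia)). lra. }
  pose proof (Rmin_l dl c). pose proof (Rmin_r dl c).
  assert (Htm : tt m < / INR (S m)) by (apply Hxs).
  pose proof (Hpos m).
  assert (Hw : Rbar_le (Fin c) (Delta2 f xb vzero (tt m) (hs m))).
  { apply Hcw. exists (tt m), (hs m). split. lra. split; auto.
    apply norm_lt. lra. specialize (HN1 k ltac:(lia)). unfold R_dist in HN1.
    rewrite Rminus_0_r in HN1. fold m in HN1. pose proof (Rle_abs (inner (vsub (hs m) h) (vsub (hs m) h))). lra. }
  rewrite (Delta2_eq n f xb r0) in Hw by auto.
  assert (Ex : vadd xb (vscal (tt m) (hs m)) = xs m).
  { apply functional_extensionality; intros i. unfold hs, vadd, vscal, vsub. field. lra. }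
  rewrite Ex in Hw. destruct (Hval m) as [r [Hr Hlt]]. rewrite Hr in Hw. simpl in Hw.
  assert (INR (S m) > 0) by (apply lt_0_INR; lia).
  assert (HK : 0 < / (tt m * (tt m * 1) / 2)) by (apply Rinv_0_lt_compat; nra).
  assert (Hm : / (tt m * (tt m * 1) / 2) * (r + - r0) < / (tt m * (tt m * 1) / 2) * (/ INR (S m) / 2 * tt m ^ 2)).
  { apply Rmult_lt_compat_l; lra. }
  replace (/ (tt m * (tt m * 1) / 2) * (/ INR (S m) / 2 * tt m ^ 2)) with (/ INR (S m)) in Hm by (field; repeat split; lra).
  lra.
Qed.

Theorem corollary5p1 (n : nat) (f : vec n -> Rbar) (xb : vec n)
  (Hprop : proper f) (Hlsc : lsc f) (Hdom : in_dom f xb) :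
  let i := strict_local_min_order2 f xb in
  let ii := prox_subdiff f xb vzero /\
            exists beta, beta > 0 /\ uniform_sod_ge f xb vzero beta unit_sphere in
  let iii := prox_subdiff f xb vzero /\
            exists beta, beta > 0 /\
              forall h, unit_sphere h -> Rbar_le (Fin beta) (lower_sod f xb vzero h) in
  let iv := prox_subdiff f xb vzero /\
              forall h, unit_sphere h -> Rbar_lt (Fin 0) (lower_sod f xb vzero h) in
  (i <-> ii) /\ (i <-> iii) /\ (i <-> iv).
Proof.
  cbv zeta.
  assert (I2 : strict_local_min_order2 f xb -> prox_subdiff f xb vzero /\
            exists beta, beta > 0 /\ uniform_sod_ge f xb vzero beta unit_sphere).
  { intros H. split. apply dir_i_prox; auto. apply dir_i_unif; auto. }
  assert (I3 : (prox_subdiff f xb vzero /\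
            exists beta, beta > 0 /\ uniform_sod_ge f xb vzero beta unit_sphere) ->
           prox_subdiff f xb vzero /\ exists beta, beta > 0 /\
              forall h, unit_sphere h -> Rbar_le (Fin beta) (lower_sod f xb vzero h)).
  { intros [P [b [Hb Hu]]]. split; auto. exists b. split; auto. apply dir_ii_iii; auto. }
  assert (I4 : (prox_subdiff f xb vzero /\ exists beta, beta > 0 /\
              forall h, unit_sphere h -> Rbar_le (Fin beta) (lower_sod f xb vzero h)) ->
           prox_subdiff f xb vzero /\
              forall h, unit_sphere h -> Rbar_lt (Fin 0) (lower_sod f xb vzero h)).
  { intros [P [b [Hb Hu]]]. split; auto. intros h Hh. specialize (Hu h Hh).
    split. destruct (lower_sod f xb vzero h); simpl in *; auto; lra.
    intro E. rewrite <- E in Hu. simpl in Hu. lra. }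
  assert (I1 : (prox_subdiff f xb vzero /\
              forall h, unit_sphere h -> Rbar_lt (Fin 0) (lower_sod f xb vzero h)) ->
           strict_local_min_order2 f xb).
  { intros [_ H]. apply dir_iv_i; auto. }
  split; [|split]; split; intros; auto.
Qed.
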